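(* Let $Q$ be a quiver without oriented cycles and $\mathbf D=k\tilde Q/\mathcal I$. If $M$ is a $\Delta$-filtered $\mathbf D$-module and $i$ is a sink of $Q$, then $\mathrm{Ext}^1_{\mathbf D}(M,\Delta(i))=0$.
   Context: $k$ is an algebraically closed field. $\tilde Q$ is the double of $Q$ (arrows $\alpha\in Q_1$ and reversed arrows $\alpha^*:t(\alpha)\to s(\alpha)$), paths composed right to left; $\mathcal I$ is the ideal of $k\tilde Q$ generated by $\alpha^*\alpha-\sum_{\gamma\in Q_1,t(\gamma)=s(\alpha)}\gamma\gamma^*$ ($\alpha\in Q_1$) and $\beta^*\alpha$ ($\alpha\ne\beta\in Q_1$ with $t(\alpha)=t(\beta)$). $\Delta(i)$ is the indecomposable projective $kQ$-module with simple top $L(i)$, regarded as a $\mathbf D$-module via the surjection $\mathbf D\to kQ$ killing all $\alpha^*$. A $\mathbf D$-module is $\Delta$-filtered if it has a chain of submodules whose successive quotients are isomorphic to modules $\Delta(j)$. A vertex is a sink if no arrow of $Q$ starts there, a source if no arrow of $Q$ ends there. *)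

(* Defs.v *)
From HB Require Import structures.
From mathcomp Require Import all_boot all_order all_algebra.
Set Implicit Arguments. Unset Strict Implicit. Unset Printing Implicit Defensive.
Import GRing.Theory.
Local Open Scope ring_scope.

Section Quiver.
Variables (k : fieldType) (V A : finType) (s t : A -> V).

(* A quiver Q: vertices V, arrows A, arrow a : s a -> t a.
   Paths are sequences of arrows, composed right to left:
   [:: a_n; ...; a_1] is the path a_n ... a_1 (first a_1). *)
Fixpoint is_path (u v : V) (p : seq A) : bool :=
  match p with
  | [::] => u == v
  | a :: q => (t a == v) && is_path u (s a) q
  end.

Definition acyclic : Prop := forall (v : V) (p : seq A), is_path v v p -> p = [::].

Definition is_sink (i : V) : bool := [forall a : A, s a != i].

Fixpoint pathsn (n : nat) (u v : V) {struct n} : seq (seq A) :=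
  match n with
  | 0 => if u == v then [:: [::]] else [::]
  | n'.+1 => flatten [seq [seq a :: q | q <- pathsn n' u (s a)] | a <- enum A & t a == v]
  end.

(* Basis of Delta(i) = kQ e_i : pairs (target vertex, path from i);
   paths of length < #|V| (all paths, when Q is acyclic). *)
Definition Dbasis (i : V) : seq (V * seq A) :=
  [seq (v, p) | v <- enum V, p <- flatten [seq pathsn n i v | n <- iota 0 #|V|]].

(* A finite-dimensional representation of the double quiver on k^rdim
   (row vectors, left action of a path p written m |-> m *m X_p, so that
   X_(q p) = X_p *m X_q): vertex idempotents, arrows a, reversed arrows a^*. *)
Record rep := Rep {
  rdim : nat;
  ridem : V -> 'M[k]_rdim;
  rarr : A -> 'M[k]_rdim;
  rdual : A -> 'M[k]_rdim }.

Definition is_Dmod (M : rep) : Prop :=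
  [/\ forall v w, ridem M v *m ridem M w = (if v == w then ridem M v else 0),
      \sum_(v : V) ridem M v = 1%:M,
      forall a, rarr M a = ridem M (s a) *m rarr M a *m ridem M (t a)
    & forall a, rdual M a = ridem M (t a) *m rdual M a *m ridem M (s a)]
  /\ (forall a, rarr M a *m rdual M a = \sum_(g | t g == s a) (rdual M g *m rarr M g))
  /\ (forall a b, a != b -> t a = t b -> rarr M a *m rdual M b = 0).

Definition is_hom (M N : rep) (f : 'M[k]_(rdim M, rdim N)) : Prop :=
  [/\ forall v, ridem M v *m f = f *m ridem N v,
      forall a, rarr M a *m f = f *m rarr N a
    & forall a, rdual M a *m f = f *m rdual N a].

Definition is_ses (N E M : rep) (f : 'M[k]_(rdim N, rdim E)) (g : 'M[k]_(rdim E, rdim M)) : Prop :=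
  [/\ is_hom f, is_hom g, row_free f, row_full g & (f == kermx g)%MS].

(* Delta(i): the indecomposable projective kQ-module P(i) = kQ e_i, with
   all reversed arrows acting by zero. *)
Definition Delta (i : V) : rep :=
  let B := Dbasis i in
  let d := (i, [::]) in
  @Rep (size B)
    (fun v => \matrix_(j, j') ((j == j') && ((nth d B j).1 == v))%:R)
    (fun a => \matrix_(j, j')
       ([&& (nth d B j).1 == s a, (nth d B j').1 == t a
          & (nth d B j').2 == a :: (nth d B j).2])%:R)
    (fun _ => 0).

(* Delta-filtered D-modules: M has a chain 0 = M_0 < M_1 < ... < M_r = M of
   submodules with M_j / M_(j-1) isomorphic to some Delta(l_j); unwound from
   the top: M_(r-1) embeds in M with cokernel Delta(l_r). *)
Inductive Dfiltered : rep -> Prop :=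
  | Dfilt0 (M : rep) : is_Dmod M -> rdim M = 0%N -> Dfiltered M
  | DfiltS (M' M : rep) (l : V) (f : 'M[k]_(rdim M', rdim M))
           (g : 'M[k]_(rdim M, rdim (Delta l))) :
      is_Dmod M -> @is_ses M' M (Delta l) f g -> Dfiltered M' -> Dfiltered M.

(* Ext^1_D(M, N) = 0 (Yoneda description): every extension
   0 -> N -> E -> M -> 0 of D-modules splits. *)
Definition Ext1_zero (M N : rep) : Prop :=
  forall (E : rep) (f : 'M[k]_(rdim N, rdim E)) (g : 'M[k]_(rdim E, rdim M)),
    is_Dmod E -> is_ses f g ->
    exists h : 'M[k]_(rdim M, rdim E), is_hom h /\ h *m g = 1%:M.

End Quiver.

(* Main.v *)
Require Import Defs.
From HB Require Import structures.
From mathcomp Require Import all_boot all_order all_algebra.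
Set Implicit Arguments. Unset Strict Implicit. Unset Printing Implicit Defensive.

Section Comb.
Variables (V A : finType) (s t : A -> V).

Lemma path_cat u w v p1 p2 : is_path s t u w p2 -> is_path s t w v p1 -> is_path s t u v (p1 ++ p2).
Proof.
elim: p1 v => [|a p1 IH] v /= H2; first by move/eqP=> <-.
by case/andP=> -> /(IH _ H2).
Qed.

Lemma path_split u v p1 p2 : is_path s t u v (p1 ++ p2) ->
  exists w, is_path s t u w p2 /\ is_path s t w v p1.
Proof.
elim: p1 v => [|a p1 IH] v /=; first by move=> H; exists v; split.
case/andP=> Ht /IH [w [H1 H2]]; exists w; split => //; by rewrite Ht.
Qed.

Definition tg u (p : seq A) := if p is a :: _ then t a else u.

Lemma path_tg u v p : is_path s t u v p -> v = tg u p.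
Proof. by case: p => [|a q] /=; [move/eqP|case/andP=> /eqP]. Qed.

Lemma path_drop u v p n : is_path s t u v p ->
  is_path s t u (tg u (drop n p)) (drop n p) /\ is_path s t (tg u (drop n p)) v (take n p).
Proof.
rewrite -{1}(cat_take_drop n p) => /path_split [w [H1 H2]].
by rewrite -(path_tg H1).
Qed.

Lemma path_bound u v p : acyclic s t -> is_path s t u v p -> size p < #|V|.
Proof.
move=> Hac Hp; rewrite ltnNge; apply/negP => Hs.
set vs := [seq tg u (drop n p) | n <- iota 0 (size p).+1].
have : ~~ uniq vs.
  apply/negP => /card_uniqP Hc.
  have := max_card (mem vs); rewrite Hc size_map size_iota.
  by rewrite ltnNge Hs.
case/(uniqPn u) => n1 [n2 [Hlt Hn2]].
rewrite size_map size_iota in Hn2.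
rewrite (nth_map 0) ?size_iota ?(ltn_trans Hlt) // (nth_map 0) ?size_iota //.
rewrite !nth_iota ?(ltn_trans Hlt) // !add0n => Heq.
have [H1 _] := path_drop n2 Hp.
have [H3 _] := path_drop n1 Hp.
have E : drop n1 p = take (n2 - n1) (drop n1 p) ++ drop n2 p.
  by rewrite -{2}(subnK (ltnW Hlt)) -drop_drop cat_take_drop.
move: H3; rewrite {2}E.
case/path_split => w [Hw Hc].
rewrite Heq -(path_tg Hw) in Hc.
have := Hac _ _ Hc => /(congr1 size); rewrite size_take size_drop.
case: ifP => _; first by move/eqP; rewrite subn_eq0 leqNgt Hlt.
move/eqP; rewrite subn_eq0 => H; have := leq_ltn_trans H Hlt.
by rewrite ltnNge -ltnS Hn2.
Qed.

Lemma mem_pathsn n u v p : (p \in pathsn s t n u v) = is_path s t u v p && (size p == n).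
Proof.
elim: n v p => [|n IH] v p /=.
  case: (u =P v) => [->|Huv]; case: p => [|a q] //=; rewrite ?inE ?eqxx ?andbF //.
  by case: eqP.
apply/flatten_mapP/idP.
  case=> a; rewrite mem_filter => /andP [Ha _] /mapP [q]; rewrite IH => /andP [Hq /eqP Hs] ->.
  by rewrite /= Ha Hq Hs eqxx.
case: p => [|a q] /=; first by rewrite andbF.
move=> /andP [/andP [Ha Hq] Hs].
exists a; first by rewrite mem_filter Ha mem_enum.
by apply/mapP; exists q; rewrite // IH Hq.
Qed.

Lemma uniq_pathsn n u v : uniq (pathsn s t n u v).
Proof.
elim: n v => [|n IH] v /=; first by case: (u == v).
have -> : flatten [seq [seq a :: q | q <- pathsn s t n u (s a)] | a <- enum A & t a == v]
  = [seq (fun a q => a :: q) a q | a <- [seq a <- enum A | t a == v], q <- pathsn s t n u (s a)] by [].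
apply: allpairs_uniq_dep.
- by rewrite filter_uniq // enum_uniq.
- by move=> a _; apply: IH.
by move=> [a q] [b r] _ _ /= [-> ->].
Qed.

Definition Lp u v := flatten [seq pathsn s t n u v | n <- iota 0 #|V|].

Lemma mem_Lp u v p : acyclic s t -> (p \in Lp u v) = is_path s t u v p.
Proof.
move=> Hac; apply/flatten_mapP/idP.
  by case=> n _; rewrite mem_pathsn => /andP [].
move=> Hp; exists (size p); first by rewrite mem_iota add0n (path_bound Hac Hp).
by rewrite mem_pathsn Hp eqxx.
Qed.

Lemma mem_Lp1 u v p : (p \in Lp u v) -> is_path s t u v p.
Proof. by case/flatten_mapP => n _; rewrite mem_pathsn => /andP []. Qed.

Lemma uniq_Lp u v : uniq (Lp u v).
Proof.
rewrite /Lp; move: 0 => m; elim: #|V| m => [|N IH] m //=.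
rewrite cat_uniq uniq_pathsn IH andbT.
apply/hasPn => p /flatten_mapP [n]; rewrite mem_iota => /andP [Hn _].
rewrite mem_pathsn => /andP [_ /eqP Hs].
by rewrite mem_pathsn negb_and Hs eqn_leq [n <= _]leqNgt Hn orbT.
Qed.

Lemma Dbasis_eq i : Dbasis s t i = [seq (v, p) | v <- enum V, p <- Lp i v].
Proof. by []. Qed.

Lemma uniq_Dbasis i : uniq (Dbasis s t i).
Proof.
rewrite Dbasis_eq; apply: allpairs_uniq_dep; first exact: enum_uniq.
  by move=> v _; apply: uniq_Lp.
by move=> [v p] [w q] _ _ /= [-> ->].
Qed.

Lemma mem_Dbasis i v p : acyclic s t -> ((v, p) \in Dbasis s t i) = is_path s t i v p.
Proof.
move=> Hac; rewrite Dbasis_eq; apply/allpairsPdep/idP.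
  by case=> w [q [_ Hq [-> ->]]]; rewrite -(mem_Lp _ _ _ Hac).
by move=> Hp; exists v, p; rewrite mem_enum (mem_Lp _ _ _ Hac).
Qed.

Lemma mem_Dbasis1 i x : x \in Dbasis s t i -> is_path s t i x.1 x.2.
Proof.
by rewrite Dbasis_eq => /allpairsPdep [w [q [_ Hq ->]]]; apply: mem_Lp1.
Qed.

Lemma sink_path i v p : is_sink s i -> is_path s t i v p -> p = [::] /\ v = i.
Proof.
move=> Hsk; elim: p v => [|a p IH] v /=; first by move/eqP.
case/andP => _ /IH [-> E]; move/forallP: Hsk => /(_ a); by rewrite E eqxx.
Qed.

End Comb.
Import GRing.Theory.
Local Open Scope ring_scope.
Section Alg.
Variables (k : fieldType) (V A : finType) (s t : A -> V).

Definition propP (M : rep k V A) (i : V) := forall m : A -> 'rV[k]_(rdim M),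
  (forall a, m a *m ridem M (s a) = m a) ->
  \sum_(a | t a == i) m a *m rarr M a = 0 -> forall a, t a == i -> m a = 0.

Lemma P_Delta l i : acyclic s t -> propP (Delta k s t l) i.
Proof.
move=> Hac m Hm Hsum a0 Ha0.
set B := Dbasis s t l; set d := (l, [::] : seq A).
apply/rowP => j0; rewrite mxE; apply/eqP/negPn/negP => Hnz.
have Hsup : (nth d B j0).1 = s a0.
  have := congr1 (fun M : 'M[k]_(1, size B) => M 0 j0) (Hm a0); rewrite /= mxE (bigD1 j0) //= big1.
    rewrite !mxE eqxx /= addr0; case: eqP => // _; rewrite mulr0 => E.
    by move: Hnz; rewrite -E eqxx.
  by move=> j Hj; rewrite !mxE (negbTE Hj) /= mulr0.
set q := (nth d B j0).2.
have Hq : is_path s t l (s a0) q.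
  by rewrite -Hsup; apply: mem_Dbasis1; apply: mem_nth.
have Hin : (t a0, a0 :: q) \in B by rewrite mem_Dbasis //= eqxx Hq.
set j1 : 'I_(size B) := Ordinal (etrans (index_mem _ _) Hin).
have Hj1 : nth d B j1 = (t a0, a0 :: q) by rewrite /= nth_index.
have Hrest : forall a (j : 'I_(size B)), (a != a0) || (j != j0) ->
    rarr (Delta k s t l) a j j1 = 0.
  move=> a j Hne /=; rewrite mxE Hj1 /=.
  case H: [&& _, _ & _] => //; exfalso.
  move/and3P: H => [/eqP H1 _ /eqP [Ea Eq]]; subst a.
  move: Hne; rewrite eqxx /= => /negP; apply.
  apply/eqP; apply: val_inj; apply/eqP => /=.
  rewrite -(nth_uniq d (ltn_ord j) (ltn_ord j0) (uniq_Dbasis s t l)).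
  apply/eqP; rewrite [nth d B j]surjective_pairing [nth d B j0]surjective_pairing.
  by rewrite H1 Hsup -Eq.
have := congr1 (fun M : 'M[k]_(1, size B) => M 0 j1) Hsum.
rewrite /= summxE (bigD1 a0) //= big1; last first.
  by move=> a /andP [_ Ha]; rewrite mxE big1 // => j _; rewrite Hrest ?Ha ?mulr0.
rewrite addr0 mxE (bigD1 j0) //= big1; last first.
  by move=> j Hj; rewrite Hrest ?Hj ?orbT ?mulr0.
rewrite addr0 mxE Hj1 /= Hsup (_ : [&& _, _ & _] = true); last by apply/and3P.
rewrite mulr1 mxE => E.
by move: Hnz; rewrite E eqxx.
Qed.

Lemma rdim0_row (M : rep k V A) (x : 'rV[k]_(rdim M)) : rdim M = 0%N -> x = 0.
Proof. by move=> H; apply/rowP => j; have := ltn_ord j; rewrite {2}H. Qed.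

Lemma P_step (M' M N : rep k V A) (f : 'M[k]_(rdim M', rdim M)) (g : 'M[k]_(rdim M, rdim N)) i :
  is_ses f g -> propP N i -> propP M' i -> propP M i.
Proof.
case=> [[Hf1 Hf2 Hf3] [Hg1 Hg2 Hg3] Hfree Hfull Hker] PN PM' m Hm Hsum.
have Hg0 : forall a, t a == i -> m a *m g = 0.
  apply: (PN (fun a => m a *m g)).
    by move=> a; rewrite -mulmxA -Hg1 mulmxA Hm.
  under eq_bigr => a _ do rewrite -mulmxA -Hg2 mulmxA.
  by rewrite -mulmx_suml Hsum mul0mx.
have Hsub : forall a, t a == i -> (m a <= f)%MS.
  move=> a Ha; have /andP [_ H2] := Hker; apply: submx_trans H2.
  by apply/sub_kermxP; apply: Hg0.
pose m' a := if t a == i then m a *m pinvmx f else 0.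
have Hm'f : forall a, t a == i -> m' a *m f = m a.
  by move=> a Ha; rewrite /m' Ha mulmxKpV // Hsub.
have Hinj := row_free_inj Hfree.
have Hm'0 : forall a, t a == i -> m' a = 0.
  apply: PM'.
- move=> a; case Ha: (t a == i); last by rewrite /m' Ha mul0mx.
  by apply: Hinj; rewrite /= -mulmxA Hf1 mulmxA Hm'f // Hm.
- apply: Hinj => /=; rewrite mul0mx mulmx_suml.
  rewrite -[RHS]Hsum; apply: eq_bigr => a Ha.
  by rewrite -mulmxA Hf2 mulmxA Hm'f.
by move=> a Ha; rewrite -(Hm'f a Ha) Hm'0 // mul0mx.
Qed.

Lemma P_filt (M : rep k V A) i : acyclic s t -> Dfiltered s t M -> propP M i.
Proof.
move=> Hac; elim => [N _ H0 | M' N l f g _ Hses _ IH].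
  by move=> m _ _ a _; apply: rdim0_row.
by apply: P_step Hses _ IH; apply: P_Delta.
Qed.

End Alg.
Import GRing.Theory.
Local Open Scope ring_scope.

Section Split.
Variables (k : fieldType) (dN dE dM : nat) (f : 'M[k]_(dN, dE)) (g : 'M[k]_(dE, dM))
  (phi : 'M[k]_(dE, dN)).
Hypotheses (Hker : (f == kermx g)%MS) (Hfull : row_full g) (Hfphi : f *m phi = 1%:M).

Definition hsplit := pinvmx g *m (1%:M - phi *m f).

Lemma pinv_g : pinvmx g *m g = 1%:M.
Proof. by have := mulmxKpV (_ : (1%:M <= g)%MS); rewrite mul1mx sub1mx; apply. Qed.

Lemma fg0 : f *m g = 0.
Proof. by apply/sub_kermxP; case/andP: Hker. Qed.

Lemma hsplit_g : hsplit *m g = 1%:M.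
Proof.
by rewrite /hsplit -mulmxA mulmxBl mul1mx -[phi *m f *m g]mulmxA fg0 !mulmx0 subr0 pinv_g.
Qed.

Lemma hsplit_hom (XN : 'M[k]_dN) (XE : 'M[k]_dE) (XM : 'M[k]_dM) :
  XN *m f = f *m XE -> XE *m g = g *m XM -> XE *m phi = phi *m XN ->
  XM *m hsplit = hsplit *m XE.
Proof.
move=> H1 H2 H3.
have Hpi : XE *m (1%:M - phi *m f) = (1%:M - phi *m f) *m XE.
  by rewrite mulmxBr mulmxBl mulmx1 mul1mx mulmxA H3 -mulmxA H1 mulmxA.
set d := XM *m pinvmx g - pinvmx g *m XE.
have Hd : (d <= f)%MS.
  case/andP: Hker => _; apply: submx_trans; apply/sub_kermxP.
  by rewrite /d mulmxBl -mulmxA pinv_g mulmx1 -mulmxA H2 mulmxA pinv_g mul1mx subrr.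
case/submxP: Hd => w Hw.
have Hdpi : d *m (1%:M - phi *m f) = 0.
  by rewrite Hw -mulmxA mulmxBr mulmx1 mulmxA Hfphi mul1mx subrr mulmx0.
rewrite /hsplit mulmxA.
have -> : XM *m pinvmx g = d + pinvmx g *m XE by rewrite /d subrK.
by rewrite mulmxDl Hdpi add0r -mulmxA Hpi mulmxA.
Qed.
End Split.

Section Main.
Variables (k : fieldType) (V A : finType) (s t : A -> V).

Lemma sink_nth i j : is_sink s i -> (nth (i, [::]) (Dbasis s t i) j).1 = i.
Proof.
move=> Hsk; case: (ltnP j (size (Dbasis s t i))) => H; last by rewrite nth_default.
have := mem_Dbasis1 (mem_nth (i, [::]) H).
by case/(sink_path Hsk) => _ ->.
Qed.

Lemma Delta_idem i v : is_sink s i ->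
  ridem (Delta k s t i) v = if i == v then 1%:M else 0.
Proof.
move=> Hsk; apply/matrixP => j j'; rewrite /= !mxE sink_nth //.
by case: (i == v); rewrite ?mxE ?andbT ?andbF.
Qed.

Lemma Delta_arr i a : is_sink s i -> rarr (Delta k s t i) a = 0.
Proof.
move=> Hsk; apply/matrixP => j j'; rewrite /= !mxE sink_nth //.
have : s a != i by move/forallP: Hsk.
by rewrite eq_sym => /negbTE ->.
Qed.

End Main.
Import GRing.Theory.
Local Open Scope ring_scope.

Theorem mainTheorem9 (k : closedFieldType) (V A : finType) (s t : A -> V)
  (M : rep k V A) (i : V) :
  acyclic s t -> Dfiltered s t M -> is_sink s i ->
  Ext1_zero s t M (Delta k s t i).
Proof.
move=> Hac Hfilt Hsk E f g HE Hses.
have PM : propP s t M i by apply: P_filt.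
case: Hses => [[Hf1 Hf2 Hf3] [Hg1 Hg2 Hg3] Hfree Hfull Hker].
case: HE => [[He1 He2 He3 He4] _].
set N := Delta k s t i.
have Hsa : forall a, s a != i by move=> a; move/forallP: Hsk.
have HNe : forall v, ridem N v = if i == v then 1%:M else 0 by move=> v; apply: Delta_idem.
have Hff : f *m ridem E i = f by rewrite -Hf1 HNe eqxx mul1mx.
have Hfv : forall v, v != i -> f *m ridem E v = 0.
  by move=> v Hv; rewrite -Hf1 HNe eq_sym (negbTE Hv) mul0mx.
have Hfg : f *m g = 0 by apply: fg0.
have Hkf : (kermx g <= f)%MS by case/andP: Hker.
have HXs : forall a, ridem E (s a) *m rarr E a = rarr E a.
  by move=> a; rewrite {1}He3 !mulmxA He1 eqxx -He3.
have HXi : forall a, rarr E a *m ridem E i = if t a == i then rarr E a else 0.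
  move=> a; rewrite {1}He3 -mulmxA He1; case: eqP => [_|_]; last by rewrite !mulmx0.
  by rewrite -He3.
have HDi : forall a, rdual E a *m ridem E i = 0.
  by move=> a; rewrite He4 -mulmxA He1 (negbTE (Hsa a)) mulmx0.
set S1 := (\sum_(v | v != i) ridem E v)%MS.
set S2 := (\sum_a rarr E a)%MS.
set S3 := (\sum_a rdual E a)%MS.
set J := (S1 + S2 + S3)%MS.
have capJ : (f :&: J)%MS == 0.
  apply/rowV0P => y; rewrite sub_capmx => /andP [/submxP [u ->] HyJ].
  have [y1 [y2 [y3 [Hy Hy1 Hy2 Hy3]]]] : exists y1 y2 y3,
      [/\ u *m f = y1 + y2 + y3, (y1 <= S1)%MS, (y2 <= S2)%MS & (y3 <= S3)%MS].
    case/sub_addsmxP: HyJ => [[u1 u2] /= ->].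
    case/sub_addsmxP: (submxMl u1 (S1 + S2)%MS) => [[v1 v2] /= ->].
    by exists (v1 *m S1), (v2 *m S2), (u2 *m S3); split; rewrite ?submxMl.
  case/sub_sumsmxP: Hy1 => a_ Ha_.
  case/sub_sumsmxP: Hy2 => b_ Hb_.
  case/sub_sumsmxP: Hy3 => c_ Hc_.
  have Hy' : u *m f = \sum_(a | t a == i) (b_ a *m ridem E (s a)) *m rarr E a.
    rewrite -{1}Hff mulmxA Hy !mulmxDl Ha_ Hb_ Hc_ !mulmx_suml.
    rewrite big1 ?add0r; last by move=> v Hv; rewrite -mulmxA He1 (negbTE Hv) mulmx0.
    rewrite [X in _ + X]big1 ?addr0; last by move=> a _; rewrite -mulmxA HDi mulmx0.
    rewrite [RHS]big_mkcond /=; apply: eq_bigr => a _.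
    by rewrite -mulmxA HXi -mulmxA HXs; case: (t a == i); rewrite ?mulmx0.
  pose m a := b_ a *m ridem E (s a).
  have Hmm : forall a, m a *m ridem E (s a) = m a by move=> a; rewrite /m -mulmxA He1 eqxx.
  have Hmg : forall a, t a == i -> m a *m g = 0.
    apply: (PM (fun a => m a *m g)).
      by move=> a; rewrite -mulmxA -Hg1 mulmxA Hmm.
    under eq_bigr => a _ do rewrite -mulmxA -Hg2 mulmxA.
    by rewrite -mulmx_suml -Hy' -mulmxA Hfg mulmx0.
  have Hm0 : forall a, t a == i -> m a = 0.
    move=> a Ha; have : (m a <= f)%MS.
      by apply: submx_trans Hkf; apply/sub_kermxP; apply: Hmg.
    case/submxP => z Hz; rewrite -Hmm Hz -mulmxA Hfv ?mulmx0 //.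
  by rewrite Hy' big1 // => a Ha; rewrite -/(m a) Hm0 ?mul0mx.
have Hrf : row_free (f *m cokermx J).
  rewrite -kermx_eq0; set W := kermx _.
  have HW : (W *m f <= J)%MS by rewrite submxE -mulmxA mulmx_ker.
  have : (W *m f <= f :&: J)%MS by rewrite sub_capmx submxMl HW.
  rewrite (eqP capJ) submx0 => /eqP HWf.
  have : (W <= kermx f)%MS by apply/sub_kermxP.
  by move: Hfree; rewrite -kermx_eq0 => /eqP ->; rewrite submx0.
case/row_freeP: Hrf => psi Hpsi.
set phi := cokermx J *m psi.
have Hfphi : f *m phi = 1%:M by rewrite mulmxA.
have HJ0 : forall m (X : 'M_(m, rdim E)), (X <= J)%MS -> X *m phi = 0.
  by move=> m X; rewrite submxE => /eqP HX; rewrite /phi mulmxA HX mul0mx.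
have He_J : forall v, v != i -> (ridem E v <= J)%MS.
  move=> v Hv; apply: submx_trans (addsmxSl _ S3).
  apply: submx_trans (addsmxSl _ S2).
  exact: (sumsmx_sup v Hv (submx_refl _)).
have Ha_J : forall a, (rarr E a <= J)%MS.
  move=> a; apply: submx_trans (addsmxSl _ S3).
  apply: submx_trans (addsmxSr S1 _).
  exact: (sumsmx_sup a (erefl true) (submx_refl _)).
have Hd_J : forall a, (rdual E a <= J)%MS.
  move=> a; apply: submx_trans (addsmxSr _ S3).
  exact: (sumsmx_sup a (erefl true) (submx_refl _)).
have Hphi1 : forall v, ridem E v *m phi = phi *m ridem N v.
  move=> v; rewrite HNe; case: eqP => [<-|Hv]; last first.
    by rewrite mulmx0 HJ0 // He_J //; apply/eqP => E'; apply: Hv.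
  rewrite mulmx1 -{2}[phi]mul1mx -He2 mulmx_suml (bigD1 i) //= big1 ?addr0 //.
  by move=> w Hw; rewrite HJ0 // He_J.
have Hphi2 : forall a, rarr E a *m phi = phi *m rarr N a.
  by move=> a; rewrite Delta_arr // mulmx0 HJ0.
have Hphi3 : forall a, rdual E a *m phi = phi *m rdual N a.
  by move=> a; rewrite /= mulmx0 HJ0.
exists (hsplit f g phi); split; last exact: hsplit_g.
split=> [v|a|a].
- exact: (hsplit_hom Hker Hfull Hfphi (Hf1 v) (Hg1 v) (Hphi1 v)).
- exact: (hsplit_hom Hker Hfull Hfphi (Hf2 a) (Hg2 a) (Hphi2 a)).
- exact: (hsplit_hom Hker Hfull Hfphi (Hf3 a) (Hg3 a) (Hphi3 a)).
Qed.
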